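(* (1) Let $G$ be a group acting on an event structure $E$ (by automorphisms). Then the set $\mathcal S_G(E)$ of all bijections $\theta:x\cong y$ between configurations of $E$ such that $\theta$ is the restriction to $x$ of the automorphism $g:E\to E$ for some $g\in G$ (so $y=g(x)$) is an isomorphism family on $E$. (2) Let $(A,\mathcal N,\mathcal P,\lambda)$ be a game. Then $A$ equipped with $\mathcal S_-:=\mathcal S_{\mathcal N}(A)$, $\mathcal S_+:=\mathcal S_{\mathcal P}(A)$, and $\mathcal S$ the closure of $\mathcal S_-\cup\mathcal S_+$ under composition (of composable bijections), is a thin concurrent game.
   Context: An event structure (with polarity) is a set $E$ with a partial order $\leq$ such that every element has finitely many elements below it, an irreflexive symmetric relation $\#$ that is hereditary (if $a\leq a'$ and $a\#b$ then $a'\#b$), and a polarity function into $\{-,+\}$. A configuration is a finite down-closed conflict-free subset; $\mathrm{Conf}(E)$ denotes the set of them. $x\subseteq^+y$ (resp. $x\subseteq^-y$) means $x\subseteq y$ and every element of $y\setminus x$ is positive (resp. negative). An automorphism is a bijection preserving and reflecting $\leq$, $\#$ and polarity; an action of a group is a homomorphism into the automorphism group. An automorphism fixes $x$ if it is the identity on $x$; it is negative if whenever it fixes $x$ and $x\subseteq^+y$ it fixes $y$, positive if likewise with $\subseteq^-$. A game is $(A,\mathcal N,\mathcal P,\lambda)$ with $\mathcal N$ a group acting on $A$ by negative automorphisms, $\mathcal P$ a group acting by positive automorphisms, and $\lambda:\mathcal N\times\mathcal P\to\mathcal P\times\mathcal N$ satisfying for all $\alpha,\alpha'\in\mathcal N$,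 $\beta,\beta'\in\mathcal P$: (i) $\lambda(e,\beta)=(\beta,e)$, $\lambda(\alpha,e)=(e,\alpha)$; (ii) if $\lambda(\alpha',\beta)=(\beta_1,\alpha_1)$ and $\lambda(\alpha,\beta_1)=(\beta_2,\alpha_2)$ then $\lambda(\alpha\alpha',\beta)=(\beta_2,\alpha_2\alpha_1)$; (iii) if $\lambda(\alpha,\beta)=(\beta_1,\alpha_1)$ and $\lambda(\alpha_1,\beta')=(\beta_2,\alpha_2)$ then $\lambda(\alpha,\beta\beta')=(\beta_1\beta_2,\alpha_2)$; (iv) if $\lambda(\alpha,\beta)=(\beta',\alpha')$ then $\alpha(\beta(a))=\beta'(\alpha'(a))$ for all $a\in A$. For bijections $\theta:x\cong y$, $\theta':x'\cong y'$ between configurations, write $\theta\subseteq\theta'$ if $x\subseteq x'$ and $\theta'$ restricted to $x$ is $\theta$; write $\theta\subseteq^+\theta'$ (resp. $\subseteq^-$) if moreover $x\subseteq^+x'$ (resp. $x\subseteq^-x'$). An isomorphism family on $E$ is a set $\mathcal S$ of polarity-preserving bijections between configurations of $E$ containing all identities $\mathrm{id}_x$ ($x\in\mathrm{Conf}(E)$), closed under composition and inverses, such that for every $\theta:x\cong y$ in $\mathcal S$: (restriction) if $x'\subseteq x$ is a configuration then the restriction of $\theta$ to $x'$ is in $\mathcal S$; (extension) if $x\subseteq x'\in\mathrm{Conf}(E)$ then there is $\theta':x'\cong y'$ in $\mathcal S$ with $\theta\subseteq\theta'$. A thin concurrent game is an event structure $A$ with three isomorphism families $\mathcal S,\mathcal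 S_+,\mathcal S_-$ with $\mathcal S_+,\mathcal S_-\subseteq\mathcal S$ such that: if $\theta\in\mathcal S_+\cap\mathcal S_-$ then $\theta=\mathrm{id}_x$ for some configuration $x$; if $\theta\in\mathcal S_+$ and $\theta\subseteq^+\theta'\in\mathcal S$ then $\theta'\in\mathcal S_+$; if $\theta\in\mathcal S_-$ and $\theta\subseteq^-\theta'\in\mathcal S$ then $\theta'\in\mathcal S_-$. *)

(* Defs.v *)
From Stdlib Require Import List.
Set Implicit Arguments.

(* ---------- Event structures with polarity (true = +, false = -) ---------- *)
Record evstruct := EvStruct {
  ev :> Type;
  ev_le : ev -> ev -> Prop;
  ev_cf : ev -> ev -> Prop;
  ev_pol : ev -> bool;
  ev_le_refl : forall a, ev_le a a;
  ev_le_antisym : forall a b, ev_le a b -> ev_le b a -> a = b;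
  ev_le_trans : forall a b c, ev_le a b -> ev_le b c -> ev_le a c;
  ev_finite_causes : forall a, exists l : list ev, forall b, ev_le b a -> In b l;
  ev_cf_irrefl : forall a, ~ ev_cf a a;
  ev_cf_sym : forall a b, ev_cf a b -> ev_cf b a;
  ev_cf_hered : forall a a' b, ev_le a a' -> ev_cf a b -> ev_cf a' b
}.

Definition is_conf (E : evstruct) (x : E -> Prop) : Prop :=
  (exists l : list E, forall e, x e -> In e l) /\
  (forall a b, ev_le E a b -> x b -> x a) /\
  (forall a b, x a -> x b -> ~ ev_cf E a b).

Definition subset {E : evstruct} (x y : E -> Prop) := forall e, x e -> y e.
Definition subset_pos {E : evstruct} (x y : E -> Prop) :=
  subset x y /\ forall e, y e -> ~ x e -> ev_pol E e = true.
Definition subset_neg {E : evstruct} (x y : E -> Prop) :=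
  subset x y /\ forall e, y e -> ~ x e -> ev_pol E e = false.

Definition is_aut (E : evstruct) (f : E -> E) : Prop :=
  (forall a b, f a = f b -> a = b) /\ (forall b, exists a, f a = b) /\
  (forall a b, ev_le E a b <-> ev_le E (f a) (f b)) /\
  (forall a b, ev_cf E a b <-> ev_cf E (f a) (f b)) /\
  (forall a, ev_pol E (f a) = ev_pol E a).

Definition fixes {E : evstruct} (f : E -> E) (x : E -> Prop) :=
  forall e, x e -> f e = e.

Definition negative_aut {E : evstruct} (f : E -> E) :=
  forall x y, is_conf E x -> is_conf E y -> fixes f x -> subset_pos x y -> fixes f y.
Definition positive_aut {E : evstruct} (f : E -> E) :=
  forall x y, is_conf E x -> is_conf E y -> fixes f x -> subset_neg x y -> fixes f y.

Record group := Group {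
  gcar :> Type;
  gmul : gcar -> gcar -> gcar;
  gone : gcar;
  ginv : gcar -> gcar;
  gmulA : forall a b c, gmul a (gmul b c) = gmul (gmul a b) c;
  gmul1l : forall a, gmul gone a = a;
  gmulVl : forall a, gmul (ginv a) a = gone
}.

Definition is_action {G : group} {E : evstruct} (act : G -> E -> E) : Prop :=
  (forall g, is_aut E (act g)) /\
  (forall e, act (gone G) e = e) /\
  (forall g h e, act (gmul G g h) e = act g (act h e)).

(* ---------- Partial bijections, represented by their graphs ---------- *)
Definition prel (E : evstruct) := E -> E -> Prop.

Definition pdom {E : evstruct} (t : prel E) : E -> Prop := fun a => exists b, t a b.
Definition pcod {E : evstruct} (t : prel E) : E -> Prop := fun b => exists a, t a b.

Definition conf_bij {E : evstruct} (t : prel E) : Prop :=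
  is_conf E (pdom t) /\ is_conf E (pcod t) /\
  (forall a b b', t a b -> t a b' -> b = b') /\
  (forall a a' b, t a b -> t a' b -> a = a').

Definition pol_pres {E : evstruct} (t : prel E) : Prop :=
  forall a b, t a b -> ev_pol E a = ev_pol E b.

Definition id_on {E : evstruct} (x : E -> Prop) : prel E := fun a b => x a /\ a = b.
Definition pinv {E : evstruct} (t : prel E) : prel E := fun b a => t a b.
(* pcomp t t' = t' ∘ t (first t, then t') *)
Definition pcomp {E : evstruct} (t t' : prel E) : prel E :=
  fun a c => exists b, t a b /\ t' b c.
Definition composable {E : evstruct} (t t' : prel E) : Prop :=
  forall e, pcod t e <-> pdom t' e.
Definition prestrict {E : evstruct} (t : prel E) (x : E -> Prop) : prel E :=
  fun a b => t a b /\ x a.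

Definition psub {E : evstruct} (t t' : prel E) := forall a b, t a b -> t' a b.
Definition psub_pos {E : evstruct} (t t' : prel E) :=
  psub t t' /\ subset_pos (pdom t) (pdom t').
Definition psub_neg {E : evstruct} (t t' : prel E) :=
  psub t t' /\ subset_neg (pdom t) (pdom t').

Definition iso_family {E : evstruct} (S : prel E -> Prop) : Prop :=
  (forall t, S t -> conf_bij t /\ pol_pres t) /\
  (forall x, is_conf E x -> S (id_on x)) /\
  (forall t t', S t -> S t' -> composable t t' -> S (pcomp t t')) /\
  (forall t, S t -> S (pinv t)) /\
  (forall t x', S t -> is_conf E x' -> subset x' (pdom t) -> S (prestrict t x')) /\
  (forall t x', S t -> is_conf E x' -> subset (pdom t) x' ->
     exists t', S t' /\ psub t t' /\ (forall e, pdom t' e <-> x' e)).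

Definition S_of {G : group} {E : evstruct} (act : G -> E -> E) : prel E -> Prop :=
  fun t => exists (g : G) (x : E -> Prop), is_conf E x /\
    forall a b, t a b <-> (x a /\ b = act g a).

Inductive comp_closure {E : evstruct} (T : prel E -> Prop) : prel E -> Prop :=
| cc_base : forall t, T t -> comp_closure T t
| cc_comp : forall t t', comp_closure T t -> comp_closure T t' ->
    composable t t' -> comp_closure T (pcomp t t').

Definition is_game {A : evstruct} {N P : group}
  (actN : N -> A -> A) (actP : P -> A -> A) (lam : N -> P -> P * N) : Prop :=
  is_action actN /\ (forall a : N, negative_aut (actN a)) /\
  is_action actP /\ (forall b : P, positive_aut (actP b)) /\
  (forall b : P, lam (gone N) b = (b, gone N)) /\
  (forall a : N, lam a (gone P) = (gone P, a)) /\
  (forall (a a' : N) (b b1 b2 : P) (a1 a2 : N),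
     lam a' b = (b1, a1) -> lam a b1 = (b2, a2) ->
     lam (gmul N a a') b = (b2, gmul N a2 a1)) /\
  (forall (a a1 a2 : N) (b b' b1 b2 : P),
     lam a b = (b1, a1) -> lam a1 b' = (b2, a2) ->
     lam a (gmul P b b') = (gmul P b1 b2, a2)) /\
  (* (iv) *)
  (forall (a a' : N) (b b' : P),
     lam a b = (b', a') -> forall e : A, actN a (actP b e) = actP b' (actN a' e)).

Definition thin_cg {A : evstruct} (S Sp Sm : prel A -> Prop) : Prop :=
  iso_family S /\ iso_family Sp /\ iso_family Sm /\
  (forall t, Sp t -> S t) /\ (forall t, Sm t -> S t) /\
  (forall t, Sp t -> Sm t -> exists x, is_conf A x /\ forall a b, t a b <-> id_on x a b) /\
  (forall t t', Sp t -> psub_pos t t' -> S t' -> Sp t') /\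
  (forall t t', Sm t -> psub_neg t t' -> S t' -> Sm t').

(* Main.v *)
Require Import Defs.
From Stdlib Require Import List Lia Classical FunctionalExtensionality PropExtensionality ClassicalEpsilon.

Lemma is_conf_ext (E : evstruct) (x y : E -> Prop) :
  (forall e, x e <-> y e) -> is_conf E x -> is_conf E y.
Proof.
  intros H [[l Hl] [Hd Hc]]. split; [|split].
  - exists l. intros e He. apply Hl, H, He.
  - intros a b Hab Hb. apply H. apply (Hd a b Hab). apply H, Hb.
  - intros a b Ha Hb. apply Hc; apply H; assumption.
Qed.

Definition img {E : evstruct} (f : E -> E) (x : E -> Prop) : E -> Prop :=
  fun b => exists a, x a /\ b = f a.

Lemma img_conf (E : evstruct) (f : E -> E) (x : E -> Prop) :
  is_aut E f -> is_conf E x -> is_conf E (img f x).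
Proof.
  intros [Hinj [Hsurj [Hle [Hcf Hpol]]]] [[l Hl] [Hd Hc]]. split; [|split].
  - exists (map f l). intros e [a [Ha ->]]. apply in_map, Hl, Ha.
  - intros a b Hab [b0 [Hb0 ->]]. destruct (Hsurj a) as [a0 <-].
    exists a0. split; [|reflexivity]. apply (Hd a0 b0); [apply (proj2 (Hle _ _)); exact Hab| exact Hb0].
  - intros a b [a0 [Ha0 ->]] [b0 [Hb0 ->]] Hcfab. apply (Hc a0 b0 Ha0 Hb0).
    apply (proj2 (Hcf _ _)), Hcfab.
Qed.

Lemma is_aut_ext (E : evstruct) (f g : E -> E) :
  (forall e, g e = f e) -> is_aut E f -> is_aut E g.
Proof.
  intros Heq [Hinj [Hsurj [Hle [Hcf Hpol]]]].
  split; [|split; [|split; [|split]]].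
  - intros a b H. apply Hinj. rewrite <- !Heq. exact H.
  - intros b. destruct (Hsurj b) as [a Ha]. exists a. rewrite Heq. exact Ha.
  - intros a b. rewrite !Heq. apply Hle.
  - intros a b. rewrite !Heq. apply Hcf.
  - intros a. rewrite Heq. apply Hpol.
Qed.

Lemma aut_comp (E : evstruct) (f h : E -> E) :
  is_aut E f -> is_aut E h -> is_aut E (fun e => h (f e)).
Proof.
  intros [Hinj [Hsurj [Hle [Hcf Hpol]]]] [Hinj' [Hsurj' [Hle' [Hcf' Hpol']]]].
  split; [|split; [|split; [|split]]].
  - intros a b H. apply Hinj, Hinj', H.
  - intros b. destruct (Hsurj' b) as [c <-]. destruct (Hsurj c) as [a <-]. exists a. reflexivity.
  - intros a b. rewrite (Hle a b). apply Hle'.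
  - intros a b. rewrite (Hcf a b). apply Hcf'.
  - intros a. rewrite Hpol'. apply Hpol.
Qed.

Definition Rfam {E : evstruct} (F : (E -> E) -> Prop) (t : prel E) : Prop :=
  exists f x, F f /\ is_conf E x /\ forall a b, t a b <-> (x a /\ b = f a).

Lemma Rfam_iso (E : evstruct) (F : (E -> E) -> Prop) :
  (forall f, F f -> is_aut E f) ->
  (exists f, F f /\ forall e, f e = e) ->
  (forall f h, F f -> F h -> exists k, F k /\ forall e, k e = h (f e)) ->
  (forall f, F f -> exists k, F k /\ forall e, k (f e) = e) ->
  iso_family (Rfam F).
Proof.
  intros Haut Hid Hcomp Hinv.
  split; [|split; [|split; [|split; [|split]]]].
  - intros t (f & x & Hf & Hx & Ht).
    pose proof (Haut f Hf) as Ha.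
    pose proof Ha as [Hinj [_ [_ [_ Hpol]]]].
    split; [split; [|split; [|split]]|].
    + apply (is_conf_ext _ x); [|exact Hx]. intro e; split.
      * intro H. exists (f e). apply Ht. split; [exact H|reflexivity].
      * intros [b Hb]. apply Ht in Hb. tauto.
    + apply (is_conf_ext _ (img f x)); [|apply img_conf; auto]. intro e; split.
      * intros [a [Ha' ->]]. exists a. apply Ht. split; [exact Ha'|reflexivity].
      * intros [a Hab]. apply Ht in Hab. destruct Hab as [Ha' ->]. exists a. split; [exact Ha'|reflexivity].
    + intros a b b' H1 H2. apply Ht in H1. apply Ht in H2.
      destruct H1 as [_ ->]; destruct H2 as [_ ->]; reflexivity.
    + intros a a' b H1 H2. apply Ht in H1. apply Ht in H2.
      destruct H1 as [_ H1]; destruct H2 as [_ H2]. apply Hinj. congruence.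
    + intros a b H. apply Ht in H. destruct H as [_ ->]. symmetry; apply Hpol.
  - intros x Hx. destruct Hid as [f0 [Hf0 Hid0]]. exists f0, x.
    split; [exact Hf0|split; [exact Hx|]]. intros a b. unfold id_on. rewrite Hid0.
    split; intros [H1 H2]; split; auto.
  - intros t t' (f & x & Hf & Hx & Ht) (h & y & Hh & Hy & Ht') Hc.
    destruct (Hcomp f h Hf Hh) as [k [Hk Hke]]. exists k, x.
    split; [exact Hk|split;[exact Hx|]]. intros a c. unfold pcomp. rewrite Hke. split.
    + intros [b [H1 H2]]. apply Ht in H1; apply Ht' in H2.
      destruct H1 as [Ha ->]; destruct H2 as [_ ->]. split; [exact Ha|reflexivity].
    + intros [Ha ->]. exists (f a). split; [apply Ht; split; [exact Ha|reflexivity]|].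
      apply Ht'. split; [|reflexivity].
      assert (pdom t' (f a)) as [c Hc'].
      { apply Hc. exists a. apply Ht. split; [exact Ha|reflexivity]. }
      apply Ht' in Hc'. tauto.
  - intros t (f & x & Hf & Hx & Ht). destruct (Hinv f Hf) as [k [Hk Hke]].
    exists k, (img f x). split; [exact Hk|split; [apply img_conf; auto|]].
    intros b a. unfold pinv. rewrite Ht. split.
    + intros [Ha ->]. split; [exists a; split; [exact Ha|reflexivity] | symmetry; apply Hke].
    + intros [[a0 [Ha0 ->]] ->]. rewrite Hke. split; [exact Ha0|reflexivity].
  - intros t x' (f & x & Hf & Hx & Ht) Hx' Hsub. exists f, x'.
    split;[exact Hf|split;[exact Hx'|]]. intros a b. unfold prestrict. rewrite Ht. split; [tauto|].
    intros [Ha ->]. split; [|exact Ha]. split; [|reflexivity].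
    assert (pdom t a) as [b Hb] by (apply Hsub; exact Ha). apply Ht in Hb. tauto.
  - intros t x' (f & x & Hf & Hx & Ht) Hx' Hsub.
    exists (fun a b => x' a /\ b = f a).
    split; [exists f, x'; split; [exact Hf|split;[exact Hx'| intros; tauto]]|split].
    + intros a b H. pose proof H as H'. apply Ht in H'. destruct H' as [Ha ->].
      split; [apply Hsub; exists (f a); exact H | reflexivity].
    + intros e; split; [intros [b [H _]]; exact H | intros H; exists (f e); split; [exact H|reflexivity]].
Qed.

Lemma iso_family_ext (E : evstruct) (S S' : prel E -> Prop) :
  (forall t, S t <-> S' t) -> iso_family S -> iso_family S'.
Proof.
  intros H (H1 & H2 & H3 & H4 & H5 & H6).
  assert (Hf : forall t, S t -> S' t) by (intros t; apply (proj1 (H t))).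
  assert (Hb : forall t, S' t -> S t) by (intros t; apply (proj2 (H t))).
  split; [|split; [|split; [|split; [|split]]]].
  - intros t Ht. apply H1, Hb, Ht.
  - intros x Hx. apply Hf, H2, Hx.
  - intros t t' Ht Ht' Hc. apply Hf, H3; [apply Hb, Ht | apply Hb, Ht' | exact Hc].
  - intros t Ht. apply Hf, H4, Hb, Ht.
  - intros t x' Ht Hx Hs. apply Hf, H5; [apply Hb, Ht|exact Hx|exact Hs].
  - intros t x' Ht Hx Hs. destruct (H6 t x' (Hb t Ht) Hx Hs) as [t' [Ht' Hr]].
    exists t'. split; [apply Hf, Ht'|exact Hr].
Qed.

Definition Fact {G : group} {E : evstruct} (act : G -> E -> E) (f : E -> E) : Prop :=
  exists g, forall e, f e = act g e.

Lemma part1 (E : evstruct) (G : group) (act : G -> E -> E) :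
  is_action act -> iso_family (S_of act).
Proof.
  intros [Haut [H1 HM]].
  assert (HR : iso_family (Rfam (Fact act))).
  { apply Rfam_iso.
    - intros f [g Hg]. apply (is_aut_ext _ (act g)); auto.
    - exists (act (gone G)). split; [exists (gone G); intro; reflexivity | exact H1].
    - intros f h [g Hg] [g' Hg']. exists (act (gmul G g' g)).
      split; [exists (gmul G g' g); intro; reflexivity|].
      intros e. rewrite HM, Hg, Hg'. reflexivity.
    - intros f [g Hg]. exists (act (ginv G g)). split; [exists (ginv G g); intro; reflexivity|].
      intros e. rewrite Hg, <- HM, gmulVl, H1. reflexivity. }
  apply (iso_family_ext _ (Rfam (Fact act))); [|exact HR].
  intros t; split.
  - intros (f & x & [g Hg] & Hx & Ht). exists g, x. split; [exact Hx|]. intros a b. rewrite Ht, Hg. tauto.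
  - intros (g & x & Hx & Ht). exists (act g), x. split; [exists g; intro; reflexivity|split; [exact Hx|exact Ht]].
Qed.

Definition F2 {A : evstruct} {N P : group} (actN : N -> A -> A) (actP : P -> A -> A) (f : A -> A) :=
  exists a b, forall e, f e = actP b (actN a e).

Lemma F2_iso (A : evstruct) (N P : group) actN actP lam :
  @is_game A N P actN actP lam -> iso_family (Rfam (F2 actN actP)).
Proof.
  intros (HN & Hneg & HP & Hpos & Hl1 & Hl2 & Hl3 & Hl4 & Hl5).
  destruct HN as [HautN [HN1 HNM]]. destruct HP as [HautP [HP1 HPM]].
  apply Rfam_iso.
  - intros f (a & b & Hf). apply (is_aut_ext _ (fun e => actP b (actN a e))); [exact Hf|].
    apply (aut_comp _ (actN a) (actP b)); auto.
  - exists (fun e => e). split; [exists (gone N), (gone P); intros e; rewrite HN1, HP1; reflexivity | intro; reflexivity].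
  - intros f h (a & b & Hf) (a' & b' & Hh).
    destruct (lam a' b) as [b2 a2] eqn:Hl.
    exists (fun e => actP (gmul P b' b2) (actN (gmul N a2 a) e)). split.
    + exists (gmul N a2 a), (gmul P b' b2). intro; reflexivity.
    + intros e. cbv beta. rewrite Hh, Hf, (Hl5 _ _ _ _ Hl), HPM, HNM. reflexivity.
  - intros f (a & b & Hf).
    destruct (lam (ginv N a) (ginv P b)) as [b' a'] eqn:Hl.
    exists (fun e => actP b' (actN a' e)). split.
    + exists a', b'. intro; reflexivity.
    + intros e. cbv beta. rewrite <- (Hl5 _ _ _ _ Hl), Hf, <- (HPM (ginv P b) b), gmulVl, HP1,
        <- (HNM (ginv N a) a), gmulVl, HN1. reflexivity.
Qed.

Lemma S_iff (A : evstruct) (N P : group) actN actP lam :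
  @is_game A N P actN actP lam ->
  forall t, comp_closure (fun t => S_of actN t \/ S_of actP t) t <-> Rfam (F2 actN actP) t.
Proof.
  intros Hg. pose proof (F2_iso _ _ _ _ _ _ Hg) as HR.
  destruct Hg as (HN & Hneg & HP & Hpos & _).
  destruct HN as [HautN [HN1 HNM]]. destruct HP as [HautP [HP1 HPM]].
  intros t; split.
  - intros H. induction H as [t [(a & x & Hx & Ht)|(b & x & Hx & Ht)] | t t' _ IH1 _ IH2 Hc].
    + exists (actN a), x. split; [exists a, (gone P); intros e; rewrite HP1; reflexivity | split; [exact Hx|exact Ht]].
    + exists (actP b), x. split; [exists (gone N), b; intros e; rewrite HN1; reflexivity | split; [exact Hx|exact Ht]].
    + destruct HR as (_ & _ & H3 & _). apply H3; assumption.
  - intros (f & x & (a & b & Hf) & Hx & Ht).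
    assert (Heq : t = pcomp (fun u v => x u /\ v = actN a u)
                            (fun u v => img (actN a) x u /\ v = actP b u)).
    { apply functional_extensionality; intro u. apply functional_extensionality; intro w.
      apply propositional_extensionality. rewrite Ht, Hf. unfold pcomp. split.
      - intros [Hu ->]. exists (actN a u). split; [split; [exact Hu|reflexivity]|].
        split; [exists u; split; [exact Hu|reflexivity] | reflexivity].
      - intros [v [[Hu ->] [_ ->]]]. split; [exact Hu|reflexivity]. }
    rewrite Heq. apply cc_comp; [apply cc_base; left | apply cc_base; right | ].
    + exists a, x. split; [exact Hx| intros; tauto].
    + exists b, (img (actN a) x). split; [apply img_conf; auto | intros; tauto].
    + intros e. unfold pcod, pdom. split.
      * intros [u [Hu ->]]. exists (actP b (actN a u)). split; [exists u; split; [exact Hu|reflexivity] | reflexivity].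
      * intros [w [Hw _]]. destruct Hw as [u [Hu ->]]. exists u. split; [exact Hu|reflexivity].
Qed.

Lemma eq_dec_cl (T : Type) : forall a b : T, {a = b} + {a <> b}.
Proof. intros a b. apply excluded_middle_informative. Qed.

Lemma lt_ind (E : evstruct) (Pr : E -> Prop) :
  (forall e, (forall e', ev_le E e' e -> e' <> e -> Pr e') -> Pr e) -> forall e, Pr e.
Proof.
  intros H.
  assert (K : forall n e l, (forall b, ev_le E b e -> In b l) -> length l <= n -> Pr e).
  { induction n as [|n IH]; intros e l Hl Hlen.
    - destruct l as [|z l]; [|simpl in Hlen; lia]. destruct (Hl e (ev_le_refl E e)).
    - apply H. intros e' Hle Hne. apply (IH e' (remove (eq_dec_cl E) e l)).
      + intros b Hb. apply in_in_remove.
        * intros Hbe. subst b. apply Hne. exact (ev_le_antisym E _ _ Hle Hb).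
        * apply Hl. exact (ev_le_trans E b e' e Hb Hle).
      + pose proof (remove_length_lt (eq_dec_cl E) l e (Hl e (ev_le_refl E e))). lia. }
  intros e. destruct (ev_finite_causes E e) as [l Hl]. apply (K (length l) e l Hl). lia.
Qed.

Lemma down_conf (E : evstruct) (e : E) : is_conf E (fun u => ev_le E u e).
Proof.
  split; [|split].
  - destruct (ev_finite_causes E e) as [l Hl]. exists l. exact Hl.
  - intros a b Hab Hb. exact (ev_le_trans E a b e Hab Hb).
  - intros a b Ha Hb Hc. apply (ev_cf_irrefl E e).
    apply (ev_cf_hered E b e e Hb). apply ev_cf_sym. apply (ev_cf_hered E a e b Ha Hc).
Qed.

Lemma down'_conf (E : evstruct) (e : E) : is_conf E (fun u => ev_le E u e /\ u <> e).
Proof.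
  split; [|split].
  - destruct (ev_finite_causes E e) as [l Hl]. exists l. intros u [Hu _]. exact (Hl u Hu).
  - intros a b Hab [Hb Hne]. split; [exact (ev_le_trans E a b e Hab Hb)|].
    intros Hae. subst a. apply Hne. exact (ev_le_antisym E _ _ Hb Hab).
  - intros a b [Ha _] [Hb _]. destruct (down_conf E e) as [_ [_ Hc]]. apply (Hc a b Ha Hb).
Qed.

Lemma fix_agree (E : evstruct) (f g : E -> E) (x : E -> Prop) :
  negative_aut f -> positive_aut g -> is_conf E x ->
  (forall e, x e -> f e = g e) -> forall e, x e -> f e = e.
Proof.
  intros Hf Hg Hx Hagr. destruct Hx as [_ [Hdown _]].
  apply (lt_ind E (fun e => x e -> f e = e)).
  intros e IH He.
  assert (Hfix' : fixes f (fun u => ev_le E u e /\ u <> e)).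
  { intros u [Hu Hne]. apply IH; auto. apply (Hdown u e Hu He). }
  assert (Hsub : forall u, ev_le E u e -> ~ (ev_le E u e /\ u <> e) -> u = e).
  { intros u Hu Hn. apply NNPP. intro Hne. apply Hn. split; auto. }
  destruct (ev_pol E e) eqn:Hpol.
  - apply (Hf _ _ (down'_conf E e) (down_conf E e) Hfix').
    + split; [intros u [Hu _]; exact Hu | intros u Hu Hn; rewrite (Hsub u Hu Hn); exact Hpol].
    + apply ev_le_refl.
  - rewrite (Hagr e He). apply (Hg _ _ (down'_conf E e) (down_conf E e)).
    + intros u [Hu Hne]. rewrite <- (Hagr u (Hdown u e Hu He)). apply IH; auto. apply (Hdown u e Hu He).
    + split; [intros u [Hu _]; exact Hu | intros u Hu Hn; rewrite (Hsub u Hu Hn); exact Hpol].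
    + apply ev_le_refl.
Qed.

Lemma part2 (A : evstruct) (N P : group) actN actP lam :
  @is_game A N P actN actP lam ->
  thin_cg (comp_closure (fun t => S_of actN t \/ S_of actP t)) (S_of actP) (S_of actN).
Proof.
  intros Hg.
  pose proof (F2_iso _ _ _ _ _ _ Hg) as HR.
  pose proof (S_iff _ _ _ _ _ _ Hg) as HS.
  destruct Hg as (HN & Hneg & HP & Hpos & _).
  pose proof (part1 _ _ _ HN) as HIN. pose proof (part1 _ _ _ HP) as HIP.
  destruct HN as [HautN [HN1 HNM]]. destruct HP as [HautP [HP1 HPM]].
  split; [|split; [|split; [|split; [|split; [|split; [|split]]]]]].
  - apply (iso_family_ext _ (Rfam (F2 actN actP))); [intros t; symmetry; apply HS | exact HR].
  - exact HIP.
  - exact HIN.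
  - intros t Ht. apply cc_base. right. exact Ht.
  - intros t Ht. apply cc_base. left. exact Ht.
  - intros t (b & x & Hx & Ht) (a & x' & Hx' & Ht').
    assert (Hag : forall e, x' e -> actN a e = actP b e).
    { intros e He. assert (H1 : t e (actN a e)) by (apply Ht'; split; [exact He|reflexivity]).
      apply Ht in H1. destruct H1 as [_ H1]. exact H1. }
    pose proof (fix_agree _ _ _ _ (Hneg a) (Hpos b) Hx' Hag) as Hfix.
    exists x'. split; [exact Hx'|]. intros u v. rewrite Ht'. unfold id_on. split.
    + intros [Hu ->]. split; [exact Hu| symmetry; apply Hfix; exact Hu].
    + intros [Hu <-]. split; [exact Hu | symmetry; apply Hfix; exact Hu].
  - intros t t' (b & x & Hx & Ht) [Hsub [_ Hpos']] HSt'.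
    apply HS in HSt'. destruct HSt' as (f & x' & (a1 & b1 & Hf) & Hx' & Ht').
    assert (Hdx : forall e, pdom t e <-> x e).
    { intros e; split; [intros [v Hv]; apply Ht in Hv; tauto
                       | intros He; exists (actP b e); apply Ht; split; [exact He|reflexivity]]. }
    assert (Hdx' : forall e, pdom t' e <-> x' e).
    { intros e; split; [intros [v Hv]; apply Ht' in Hv; tauto
                       | intros He; exists (f e); apply Ht'; split; [exact He|reflexivity]]. }
    assert (Hag : forall e, x e -> actN a1 e = actP (gmul P (ginv P b1) b) e).
    { intros e He. assert (H1 : t e (actP b e)) by (apply Ht; split; [exact He|reflexivity]).
      apply Hsub in H1. apply Ht' in H1. destruct H1 as [_ H1]. rewrite Hf in H1.
      rewrite HPM, H1, <- (HPM (ginv P b1) b1), gmulVl, HP1. reflexivity. }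
    pose proof (fix_agree _ _ _ _ (Hneg a1) (Hpos _) Hx Hag) as Hfix.
    assert (Hfix' : fixes (actN a1) x').
    { apply (Hneg a1 x x' Hx Hx' Hfix). split.
      - intros e He. apply Hdx'. apply Hdx in He. destruct He as [v Hv]. exists v. apply Hsub, Hv.
      - intros e He' Hne. apply Hpos'; [apply Hdx'; exact He' | intro H; apply Hne, Hdx, H]. }
    exists b1, x'. split; [exact Hx'|]. intros u v. rewrite Ht', Hf. split.
    + intros [Hu ->]. split; [exact Hu|]. rewrite (Hfix' u Hu). reflexivity.
    + intros [Hu ->]. split; [exact Hu|]. rewrite (Hfix' u Hu). reflexivity.
  - intros t t' (a & x & Hx & Ht) [Hsub [_ Hneg']] HSt'.
    apply HS in HSt'. destruct HSt' as (f & x' & (a1 & b1 & Hf) & Hx' & Ht').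
    assert (Hdx : forall e, pdom t e <-> x e).
    { intros e; split; [intros [v Hv]; apply Ht in Hv; tauto
                       | intros He; exists (actN a e); apply Ht; split; [exact He|reflexivity]]. }
    assert (Hdx' : forall e, pdom t' e <-> x' e).
    { intros e; split; [intros [v Hv]; apply Ht' in Hv; tauto
                       | intros He; exists (f e); apply Ht'; split; [exact He|reflexivity]]. }
    assert (Hxx' : forall e, x e -> x' e).
    { intros e He. apply Hdx'. apply Hdx in He. destruct He as [v Hv]. exists v. apply Hsub, Hv. }
    assert (Heq : forall e, x e -> actN a e = actP b1 (actN a1 e)).
    { intros e He. assert (H1 : t e (actN a e)) by (apply Ht; split; [exact He|reflexivity]).
      apply Hsub in H1. apply Ht' in H1. destruct H1 as [_ H1]. rewrite Hf in H1. exact H1. }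
    assert (Hy : is_conf A (img (actN a1) x)) by (apply img_conf; auto).
    assert (Hy' : is_conf A (img (actN a1) x')) by (apply img_conf; auto).
    assert (Hag : forall u, img (actN a1) x u -> actN (gmul N a (ginv N a1)) u = actP b1 u).
    { intros u [e [He ->]]. rewrite HNM, <- (HNM (ginv N a1) a1), gmulVl, HN1. apply Heq, He. }
    pose proof (fix_agree _ _ _ _ (Hneg _) (Hpos b1) Hy Hag) as Hfix.
    assert (HfixP : fixes (actP b1) (img (actN a1) x)).
    { intros u Hu. rewrite <- (Hag u Hu). apply Hfix, Hu. }
    destruct (HautN a1) as (_ & _ & _ & _ & Hpl).
    assert (HfixP' : fixes (actP b1) (img (actN a1) x')).
    { apply (Hpos b1 _ _ Hy Hy' HfixP). split.
      - intros u [e [He ->]]. exists e. split; [apply Hxx', He | reflexivity].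
      - intros u [e [He' ->]] Hn.
        assert (Hnx : ~ x e) by (intro He; apply Hn; exists e; split; [exact He| reflexivity]).
        rewrite Hpl. apply Hneg'; [apply Hdx'; exact He' | intro Hd; apply Hnx, Hdx, Hd]. }
    exists a1, x'. split; [exact Hx'|]. intros u v. rewrite Ht', Hf. split.
    + intros [Hu ->]. split; [exact Hu|]. apply HfixP'. exists u. split; [exact Hu|reflexivity].
    + intros [Hu ->]. split; [exact Hu|]. symmetry. apply HfixP'. exists u. split; [exact Hu|reflexivity].
Qed.

Theorem mainTheorem6 :
  (forall (E : evstruct) (G : group) (act : G -> E -> E),
     is_action act -> iso_family (S_of act)) /\
  (forall (A : evstruct) (N P : group) (actN : N -> A -> A) (actP : P -> A -> A)
          (lam : N -> P -> P * N),
     is_game actN actP lam ->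
     thin_cg (comp_closure (fun t => S_of actN t \/ S_of actP t))
             (S_of actP) (S_of actN)).
Proof.
  split.
  - intros E G act H. exact (part1 E G act H).
  - intros A N P actN actP lam H. exact (part2 A N P actN actP lam H).
Qed.
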